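(* Let $N\ge1$, $n\ge1$, and for $i=1,\dots,N$ let $\mathrm{FTA}_i\in[0,1)$ and $\mathrm{FAR}_i$ be such that $\mathrm{FMR}_i=\mathrm{FAR}_i/(1-\mathrm{FTA}_i)\in(0,1)$. Suppose an outsider attacker submits guesses each succeeding independently with probability $p=1-\prod_{i=1}^N(1-\mathrm{FMR}_i)$. Then the median number $m_{out}$ of trials for the attacker to successfully impersonate a user satisfies $$m_{out}=\Omega\left(2^{-\log_2\left(\sum_{i=1}^N\frac{\mathrm{FAR}_i}{1-\mathrm{FTA}_i}\left(1+\frac{\mathrm{FAR}_i}{1-\mathrm{FTA}_i}\right)\right)}\right)\quad\text{and}\quad m_{out}=O\left(2^{-\log_2\left(\sum_{i=1}^N\frac{\mathrm{FAR}_i}{1-\mathrm{FTA}_i}\right)}\right).$$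
   Context: For user $i$: $\mathrm{FMR}_i$ is the False Match Rate (probability an impostor guess is wrongly matched to user $i$), $\mathrm{FTA}_i$ is the Failure To Acquire rate, and $\mathrm{FAR}_i$ the False Acceptance Rate, related by $\mathrm{FAR}_i=\mathrm{FMR}_i(1-\mathrm{FTA}_i)$. The median of the number of trials until the first success of independent trials with success probability $p$ is taken to be $-1/\log_2(1-p)$. *)

(* Defs.v *)
From Stdlib Require Import Reals.
Open Scope R_scope.

(* finite sum / product over indices 0 .. N-1 (users i = 1..N of the paper) *)
Fixpoint sumR (f : nat -> R) (N : nat) : R :=
  match N with O => 0 | S k => sumR f k + f k end.
Fixpoint prodR (f : nat -> R) (N : nat) : R :=
  match N with O => 1 | S k => prodR f k * f k end.

Definition log2 (x : R) : R := ln x / ln 2.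

Definition FMR (FTA FAR : nat -> R) (i : nat) : R := FAR i / (1 - FTA i).

Definition attack_prob (N : nat) (fmr : nat -> R) : R :=
  1 - prodR (fun i => 1 - fmr i) N.

(* median number of trials until first success, per the paper's convention *)
Definition median_trials (p : R) : R := - 1 / log2 (1 - p).

(* Main.v *)
Require Import Defs.
From Stdlib Require Import Reals Lra Lia.
Open Scope R_scope.

Lemma ln_le' x y : 0 < x -> x <= y -> ln x <= ln y.
Proof. intros Hx [H|H]. left; apply ln_increasing; auto. subst; lra. Qed.

Lemma ptA x : 0 < x < 1 -> ln (1 - x) <= - x.
Proof.
  intros H. rewrite <- (ln_exp (-x)). apply ln_le'. lra.
  pose proof (exp_ineq1_le (-x)). lra.
Qed.

Lemma ptB x : 0 < x <= /2 -> -2 * x <= ln (1 - x).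
Proof.
  intros H.
  assert (Hq : ln (/ (1 - x)) <= x / (1 - x)).
  { rewrite <- (ln_exp (x / (1-x))). apply ln_le'. apply Rinv_0_lt_compat; lra.
    pose proof (exp_ineq1_le (x/(1-x))).
    replace (/ (1-x)) with (1 + x/(1-x)) by (field; lra). lra. }
  rewrite ln_Rinv in Hq by lra.
  assert (x / (1 - x) <= 2 * x).
  { apply Rmult_le_reg_r with (1 - x). lra.
    unfold Rdiv. rewrite Rmult_assoc, Rinv_l by lra. nra. }
  lra.
Qed.

Lemma L1 (f : nat -> R) k : (forall i, (i < k)%nat -> 0 < f i < 1) ->
  0 < prodR (fun i => 1 - f i) k /\ ln (prodR (fun i => 1 - f i) k) <= - sumR f k.
Proof.
  induction k as [|k IH]; intros H; simpl.
  - rewrite ln_1; lra.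
  - assert (Hk : 0 < f k < 1) by (apply H; lia).
    destruct IH as [P1 P2]. intros; apply H; lia.
    split. apply Rmult_lt_0_compat; lra.
    rewrite ln_mult by lra. pose proof (ptA _ Hk). lra.
Qed.

Lemma L2 (f : nat -> R) k : (forall i, (i < k)%nat -> 0 < f i <= /2) ->
  -2 * sumR f k <= ln (prodR (fun i => 1 - f i) k).
Proof.
  induction k as [|k IH]; intros H; simpl.
  - rewrite ln_1; lra.
  - assert (Hk : 0 < f k <= /2) by (apply H; lia).
    assert (HP : 0 < prodR (fun i => 1 - f i) k).
    { apply (L1 f k). intros i Hi. assert (0 < f i <= /2) by (apply H; lia). lra. }
    rewrite ln_mult by lra. pose proof (ptB _ Hk).
    assert (-2 * sumR f k <= ln (prodR (fun i => 1 - f i) k)) by (apply IH; intros; apply H; lia).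
    lra.
Qed.

Lemma L3 (f : nat -> R) k : (forall i, (i < k)%nat -> 0 < f i) ->
  sumR f k <= sumR (fun i => f i * (1 + f i)) k.
Proof.
  induction k as [|k IH]; intros H; simpl. lra.
  assert (0 < f k) by (apply H; lia).
  assert (sumR f k <= sumR (fun i => f i * (1 + f i)) k) by (apply IH; intros; apply H; lia).
  nra.
Qed.

Lemma L4 (f : nat -> R) k : (1 <= k)%nat -> (forall i, (i < k)%nat -> 0 < f i) ->
  0 < sumR f k.
Proof.
  induction k as [|k IH]; intros Hk H; simpl. lia.
  assert (0 < f k) by (apply H; lia).
  destruct k. simpl; lra.
  assert (0 < sumR f (S k)) by (apply IH; [lia| intros; apply H; lia]). lra.
Qed.

Lemma Rp S : 0 < S -> Rpower 2 (- log2 S) = / S.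
Proof.
  intros. unfold Rpower, log2.
  assert (0 < ln 2) by (pose proof ln_lt_2; lra).
  replace (- (ln S / ln 2) * ln 2) with (- ln S) by (field; lra).
  rewrite <- ln_Rinv by auto. apply exp_ln. apply Rinv_0_lt_compat; auto.
Qed.

Theorem proposition3p3 :
  exists c C delta : R, 0 < c /\ 0 < C /\ 0 < delta /\
  forall (N n : nat) (FTA FAR : nat -> R),
    (1 <= N)%nat -> (1 <= n)%nat ->
    (forall i, (i < N)%nat -> 0 <= FTA i < 1) ->
    (forall i, (i < N)%nat -> 0 < FAR i / (1 - FTA i) < 1) ->
    let m := median_trials (attack_prob N (FMR FTA FAR)) in
    (* m_out = O( 2^(-log2 (sum FAR_i/(1-FTA_i))) ) *)
    m <= C * Rpower 2 (- log2 (sumR (fun i => FAR i / (1 - FTA i)) N)) /\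
    (* m_out = Omega( 2^(-log2 (sum f_i (1 + f_i))) ), in the regime FMR_i -> 0 *)
    ((forall i, (i < N)%nat -> FAR i / (1 - FTA i) < delta) ->
     c * Rpower 2 (- log2 (sumR (fun i => FAR i / (1 - FTA i) *
                                  (1 + FAR i / (1 - FTA i))) N)) <= m).
Proof.
  assert (Hl2 : 0 < ln 2) by (pose proof ln_lt_2; lra).
  exists (ln 2 / 2), (ln 2), (/2).
  split. lra. split. lra. split. lra.
  intros N n FTA FAR HN Hn HFTA Hf m.
  set (f := fun i => FAR i / (1 - FTA i)).
  change (fun i => FAR i / (1 - FTA i)) with f.
  change (fun i => FAR i / (1 - FTA i) * (1 + FAR i / (1 - FTA i))) with
    (fun i => f i * (1 + f i)).
  assert (Hm : m = ln 2 / (- ln (prodR (fun i => 1 - f i) N))).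
  { unfold m, median_trials, attack_prob, FMR, log2. change (fun i => 1 - FAR i / (1 - FTA i)) with (fun i => 1 - f i).
    replace (1 - (1 - prodR (fun i => 1 - f i) N)) with (prodR (fun i => 1 - f i) N) by ring.
    destruct (L1 f N Hf) as [_ H2].
    pose proof (L4 f N HN ltac:(intros; apply Hf; auto)).
    field. split; lra. }
  destruct (L1 f N Hf) as [HP HL].
  assert (HS : 0 < sumR f N) by (apply L4; auto; intros; apply Hf; auto).
  assert (HST : sumR f N <= sumR (fun i => f i * (1 + f i)) N)
    by (apply L3; intros; apply Hf; auto).
  assert (HLS : sumR f N <= - ln (prodR (fun i => 1 - f i) N)) by lra.
  set (L := - ln (prodR (fun i => 1 - f i) N)) in *.
  rewrite Hm. split.
  - rewrite Rp by auto. unfold Rdiv. apply Rmult_le_compat_l. lra.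
    apply Rinv_le_contravar; lra.
  - intros Hd. rewrite Rp by lra.
    assert (HL2 : L <= 2 * sumR f N).
    { unfold L. assert (-2 * sumR f N <= ln (prodR (fun i => 1 - f i) N)).
      apply L2. intros i Hi. specialize (Hf i Hi). specialize (Hd i Hi). unfold f; lra.
      lra. }
    unfold Rdiv. rewrite Rmult_assoc. apply Rmult_le_compat_l. lra.
    rewrite <- Rinv_mult. apply Rinv_le_contravar; lra.
Qed.
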